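(* Under the hypotheses of the preceding statement ($\mu$-weakly convex $f$ with $\alpha$-sharp minimum on closed convex $Q$, initial point with $\min_{x_*\in X_*}\|x^0-x_*\|_2\le\alpha\gamma/\mu$ for some $\gamma\in(0,1)$, projected subgradient method with Polyak step $h_k=(f(x^k)-f^* )/\|\nabla f(x^k)\|_2^2$, iterates $x^0,\dots,x^k\notin X_*$), assume in addition that $f$ is $M$-Lipschitz. Then $$\min_{x_*\in X_*}\|x^{k+1}-x_*\|_2^2\le\Bigl(1-\frac{\alpha^2(1-\gamma)}{M^2}\Bigr)^{k+1}\min_{x_*\in X_*}\|x^0-x_*\|_2^2.$$
   Context: $f$ is $\mu$-weakly convex if $x\mapsto f(x)+\frac{\mu}{2}\|x\|_2^2$ is convex; subgradients are taken in the sense $f(y)\ge f(x)+\langle v,y-x\rangle+o(\|y-x\|_2)$. $X_*$ is the set of minimizers of $f$ on $Q$, $f^*=\min_Q f$, $\operatorname{Pr}_Q$ the Euclidean projection. *)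

(* Defs.v *)
From mathcomp Require Import all_boot all_order all_algebra.
From mathcomp Require Import boolp classical_sets reals.
Set Implicit Arguments. Unset Strict Implicit. Unset Printing Implicit Defensive.
Import Order.TTheory GRing.Theory Num.Theory.
Local Open Scope ring_scope.
Local Open Scope classical_set_scope.

Section Euclid.
Variables (R : realType) (n : nat).
Local Notation V := 'rV[R]_n.

Definition dotp (u v : V) : R := \sum_(i < n) u ord0 i * v ord0 i.
Definition enorm (u : V) : R := Num.sqrt (dotp u u).

Definition edist (x : V) (A : set V) : R := inf [set enorm (x - y) | y in A].

Definition convex_set (Q : set V) : Prop :=
  forall x y (t : R), Q x -> Q y -> 0 <= t <= 1 -> Q (t *: x + (1 - t) *: y).

Definition closed_set (Q : set V) : Prop :=
  forall x, (forall e : R, 0 < e -> exists2 y, Q y & enorm (x - y) < e) -> Q x.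

Definition convex_fun (g : V -> R) : Prop :=
  forall x y (t : R), 0 <= t <= 1 ->
    g (t *: x + (1 - t) *: y) <= t * g x + (1 - t) * g y.

Definition weakly_convex (mu : R) (f : V -> R) : Prop :=
  convex_fun (fun x => f x + mu / 2 * enorm x ^+ 2).

(* v is a subgradient of f at x:
   f y >= f x + <v, y - x> + o(||y - x||) *)
Definition subgradient (f : V -> R) (x v : V) : Prop :=
  forall e : R, 0 < e -> exists2 d : R, 0 < d & forall y,
    enorm (y - x) < d -> f x + dotp v (y - x) - e * enorm (y - x) <= f y.

Definition lipschitz (M : R) (f : V -> R) : Prop :=
  forall x y, `|f x - f y| <= M * enorm (x - y).

Definition is_proj (Q : set V) (x p : V) : Prop :=
  Q p /\ forall q, Q q -> enorm (x - p) <= enorm (x - q).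

Definition is_min_value (f : V -> R) (Q : set V) (fstar : R) : Prop :=
  (exists2 x, Q x & f x = fstar) /\ forall y, Q y -> fstar <= f y.

Definition argmin_set (f : V -> R) (Q : set V) (fstar : R) : set V :=
  [set x | Q x /\ f x = fstar].

Definition sharp_min (alpha : R) (f : V -> R) (Q : set V) (fstar : R) : Prop :=
  forall x, Q x -> alpha * edist x (argmin_set f Q fstar) <= f x - fstar.

End Euclid.

(* Main.v *)
Require Import Defs.
From mathcomp Require Import all_boot all_order all_algebra.
From mathcomp Require Import boolp classical_sets reals.
From mathcomp Require Import ring lra.
Set Implicit Arguments. Unset Strict Implicit.
Import Order.TTheory GRing.Theory Num.Theory.
Local Open Scope ring_scope.
Local Open Scope classical_set_scope.

Section Aux.
Variables (R : realType) (n : nat).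
Local Notation V := 'rV[R]_n.
Implicit Types u v w : V.

Lemma dotpDl u v w : dotp (u + v) w = dotp u w + dotp v w.
Proof. rewrite /dotp -big_split; apply: eq_bigr => i _; by rewrite !mxE mulrDl. Qed.
Lemma dotpC u v : dotp u v = dotp v u.
Proof. rewrite /dotp; apply: eq_bigr => i _; by rewrite mulrC. Qed.
Lemma dotpDr u v w : dotp w (u + v) = dotp w u + dotp w v.
Proof. by rewrite dotpC dotpDl !(dotpC w). Qed.
Lemma dotpZl (a : R) u v : dotp (a *: u) v = a * dotp u v.
Proof. rewrite /dotp mulr_sumr; apply: eq_bigr => i _; by rewrite !mxE mulrA. Qed.
Lemma dotpZr (a : R) u v : dotp v (a *: u) = a * dotp v u.
Proof. by rewrite dotpC dotpZl dotpC. Qed.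
Lemma dotpNl u v : dotp (- u) v = - dotp u v.
Proof. by rewrite -scaleN1r dotpZl mulN1r. Qed.
Lemma dotpNr u v : dotp v (- u) = - dotp v u.
Proof. by rewrite dotpC dotpNl dotpC. Qed.
Lemma dotpBl u v w : dotp (u - v) w = dotp u w - dotp v w.
Proof. by rewrite dotpDl dotpNl. Qed.
Lemma dotpBr u v w : dotp w (u - v) = dotp w u - dotp w v.
Proof. by rewrite dotpDr dotpNr. Qed.
Lemma dotp_ge0 u : 0 <= dotp u u.
Proof. rewrite /dotp; apply: sumr_ge0 => i _; by rewrite -expr2 sqr_ge0. Qed.
Lemma enorm_ge0 u : 0 <= enorm u.
Proof. exact: sqrtr_ge0. Qed.
Lemma enorm2 u : enorm u ^+ 2 = dotp u u.
Proof. by rewrite /enorm sqr_sqrtr // dotp_ge0. Qed.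
Lemma enormZ (a : R) u : 0 <= a -> enorm (a *: u) = a * enorm u.
Proof.
move=> a0; rewrite /enorm dotpZl dotpZr mulrA sqrtrM ?mulr_ge0 //.
by rewrite -expr2 sqrtr_sqr ger0_norm.
Qed.
Lemma enormN u : enorm (- u) = enorm u.
Proof. by rewrite /enorm dotpNl dotpNr opprK. Qed.
Lemma enormB u v : enorm (u - v) = enorm (v - u).
Proof. by rewrite -enormN opprB. Qed.
Lemma enorm_eq0 u : enorm u = 0 -> dotp u u = 0.
Proof. by move=> h; rewrite -enorm2 h expr2 mulr0. Qed.

Lemma edist_le (x : V) (A : set V) y : A y -> edist x A <= enorm (x - y).
Proof.
move=> Ay; rewrite /edist; apply: ge_inf; last by exists y.
by exists 0 => _ [z _ <-]; exact: enorm_ge0.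
Qed.
Lemma edist_ge0 (x : V) (A : set V) : A !=set0 -> 0 <= edist x A.
Proof.
move=> [y Ay]; apply: lb_le_inf; first by exists (enorm (x - y)), y.
by move=> _ [z _ <-]; exact: enorm_ge0.
Qed.
Lemma edist_adh (x : V) (A : set V) (e : R) : A !=set0 -> 0 < e ->
  exists2 y, A y & enorm (x - y) < edist x A + e.
Proof.
move=> [y0 Ay0] e0.
have hi : has_inf [set enorm (x - y) | y in A].
  split; first by exists (enorm (x - y0)), y0.
  by exists 0 => _ [z _ <-]; exact: enorm_ge0.
have [_ [z Az <-] h] := inf_adherent e0 hi.
by exists z.
Qed.
End Aux.

Section Aux2.
Variables (R : realType) (n : nat).
Local Notation V := 'rV[R]_n.
Implicit Types u v w : V.

Lemma nsqD u v : dotp (u + v) (u + v) = dotp u u + 2 * dotp u v + dotp v v.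
Proof. rewrite !dotpDl !dotpDr (dotpC v u); ring. Qed.

Lemma nsqB u v : dotp (u - v) (u - v) = dotp u u - 2 * dotp u v + dotp v v.
Proof. by rewrite nsqD dotpNr dotpNl dotpNr opprK; ring. Qed.

Lemma lim_sq (x : V) (X : set V) (a K C : R) : X !=set0 -> 0 <= K ->
  (forall y, X y -> a <= K * enorm (x - y) ^+ 2 + C) ->
  a <= K * edist x X ^+ 2 + C.
Proof.
move=> X0 K0 H; set d := edist x X.
have d0 : 0 <= d by exact: edist_ge0.
apply/ler_addgt0Pr => e e0.
set D := K * (2 * d + 1) + 1 + e.
have D0 : 0 < D by rewrite /D; nra.
set eps := e / D.
have epsD : eps * D = e by rewrite /eps mulfVK // gt_eqF.
have eps0 : 0 < eps by rewrite /eps divr_gt0.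
have eps1 : eps < 1.
  by rewrite /eps ltr_pdivrMr // mul1r /D; nra.
have [y Xy hy] := edist_adh x X0 eps0.
have r0 := enorm_ge0 (x - y).
have := H y Xy.
have : K * enorm (x - y) ^+ 2 <= K * (d + eps) ^+ 2.
  apply: ler_wpM2l => //; rewrite ler_sqr ?nnegrE //; [exact: ltW | nra].
have : K * eps * (2 * d + eps) <= K * eps * (2 * d + 1).
  apply: ler_wpM2l; [nra | lra].
rewrite /D in epsD; nra.
Qed.

Lemma dotp0 u : dotp u u = 0 -> u = 0.
Proof.
move=> h; apply/matrixP => i j; rewrite !mxE.
have H : \sum_(k < n) u ord0 k * u ord0 k = 0 by [].
have {}H := psumr_eq0P (fun k _ => sqr_ge0 (u ord0 k)) (etrans (eq_bigr _ (fun k _ => expr2 _)) H).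
have := H j isT; rewrite (_ : i = ord0) ?ord1 //.
by move/eqP; rewrite sqrf_eq0 => /eqP ->.
Qed.
End Aux2.

Section Aux3.
Variables (R : realType) (n : nat).
Local Notation V := 'rV[R]_n.
Implicit Types u v w : V.

Lemma wc_subgrad (mu : R) (f : V -> R) x g : 0 <= mu -> weakly_convex mu f ->
  subgradient f x g -> forall y,
  f x + dotp g (y - x) - mu / 2 * dotp (y - x) (y - x) <= f y.
Proof.
move=> mu0 wc sg y.
pose phi z := f z + mu / 2 * enorm z ^+ 2.
pose w := g + mu *: x.
have hyx : dotp y y = dotp x x + 2 * dotp x (y - x) + dotp (y - x) (y - x).
  by rewrite -nsqD addrC subrK.
suff : phi x + dotp w (y - x) <= phi y.
  rewrite /phi !enorm2 /w dotpDl dotpZl hyx; lra.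
apply/ler_addgt0Pr => e' e'0.
set r := enorm (y - x).
have r0 : 0 <= r by exact: enorm_ge0.
set e := e' / (r + 1).
have e0 : 0 < e by rewrite divr_gt0 // ltr_wpDl.
have er : e * r <= e'.
  by rewrite /e mulrAC ler_pdivrMr ?ltr_wpDl //; nra.
have [del del0 Hd] := sg e e0.
set t := del / (del + r).
have t0 : 0 < t by rewrite divr_gt0 // ltr_wpDr.
have tr : t * (del + r) = del by rewrite /t mulfVK // gt_eqF // ltr_wpDr.
have t1 : t <= 1 by nra.
set z := t *: y + (1 - t) *: x.
have zx : z - x = t *: (y - x).
  rewrite /z scalerBl scale1r scalerBr addrCA.
  by rewrite addrAC subrr add0r.
have nz : enorm (z - x) = t * r by rewrite zx enormZ // ltW.
have Hz : enorm (z - x) < del by rewrite nz; nra.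
have H1 := Hd z Hz.
have Hloc : phi x + dotp w (z - x) - e * enorm (z - x) <= phi z.
  have hz : dotp z z = dotp x x + 2 * dotp x (z - x) + dotp (z - x) (z - x).
    by rewrite -nsqD addrC subrK.
  have := dotp_ge0 (z - x).
  rewrite /phi !enorm2 /w dotpDl dotpZl hz nz.
    nra.
have Hcvx : phi z <= t * phi y + (1 - t) * phi x.
  by apply: wc; rewrite ltW.
rewrite nz zx dotpZr in Hloc.
have : t * (phi x + dotp w (y - x) - e * r - phi y) <= 0 by lra.
rewrite pmulr_rle0 //; lra.
Qed.

Lemma proj_ineq (Q : set V) z p y : convex_set Q -> is_proj Q z p -> Q y ->
  dotp (p - y) (p - y) <= dotp (z - y) (z - y).
Proof.
move=> cQ [Qp Hp] Qy.
set B := dotp (z - p) (y - p).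
set E := dotp (y - p) (y - p).
set D := dotp (z - p) (z - p).
have E0 : 0 <= E by exact: dotp_ge0.
have key : forall t, 0 < t -> t <= 1 -> 2 * B <= t * E.
  move=> t t0 t1.
  have Qq : Q (t *: y + (1 - t) *: p) by apply: cQ => //; rewrite ltW.
  have := Hp _ Qq.
  have eq : z - (t *: y + (1 - t) *: p) = (z - p) - t *: (y - p).
    by apply/matrixP => i j; rewrite !mxE; ring.
  rewrite eq => hle.
  have : D <= dotp ((z - p) - t *: (y - p)) ((z - p) - t *: (y - p)).
    rewrite /D -!enorm2; have := enorm_ge0 (z - p).
    have := enorm_ge0 ((z - p) - t *: (y - p)); nra.
  rewrite nsqB dotpZr dotpZl dotpZr -/B -/E -/D => h.
  have : t * (2 * B - t * E) <= 0 by nra.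
  rewrite pmulr_rle0 //; lra.
have B0 : B <= 0.
  rewrite leNgt; apply/negP => Bp.
  have t1 : B / (B + E) <= 1 by rewrite ler_pdivrMr ?ltr_wpDr // mul1r lerDl.
  have h := key (B / (B + E)) (divr_gt0 Bp (ltr_wpDr E0 Bp)) t1.
  have tr : B / (B + E) * (B + E) = B by rewrite mulfVK // gt_eqF // ltr_wpDr.
  nra.
have -> : z - y = (z - p) + (p - y) by rewrite addrA subrK.
rewrite (nsqD (z - p)) (_ : dotp (z - p) (p - y) = - B); last first.
  by rewrite -dotpNr opprB.
have := dotp_ge0 (z - p); lra.
Qed.

Lemma subgrad_bound (M : R) (f : V -> R) x g : lipschitz M f ->
  subgradient f x g -> 0 < enorm g -> enorm g <= M.
Proof.
move=> lip sg g0.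
apply/ler_addgt0Pr => e e0.
have [del del0 Hd] := sg e e0.
set t := del / (2 * enorm g).
have tg : t * enorm g = del / 2.
  by rewrite /t mulrAC -mulf_div divff ?gt_eqF // mulr1 mulrC.
have t0 : 0 < t by rewrite divr_gt0 // mulr_gt0.
have yx : (x + t *: g) - x = t *: g by rewrite addrC addKr.
have ny : enorm (t *: g) = del / 2 by rewrite enormZ ?ltW.
have := Hd (x + t *: g); rewrite yx ny dotpZr -enorm2.
have H := lip (x + t *: g) x.
rewrite yx ny in H.
have dl : del / 2 < del by lra.
move=> /(_ dl) H2.
have H3 : f (x + t *: g) - f x <= M * (del / 2).
  by apply: le_trans H; exact: ler_norm.
have : del / 2 * (enorm g - e - M) <= 0.
  have : t * enorm g ^+ 2 = del / 2 * enorm g by rewrite expr2 mulrA tg.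
  nra.
rewrite pmulr_rle0 ?divr_gt0 //; lra.
Qed.
End Aux3.

Section Aux4.
Variables (R : realType) (n : nat).
Local Notation V := 'rV[R]_n.

Lemma one_step (f : V -> R) (Q : set V) (mu alpha gamma M fstar : R) (x g z : V) :
  0 < mu -> 0 < alpha -> 0 < gamma < 1 ->
  weakly_convex mu f -> convex_set Q ->
  is_min_value f Q fstar -> sharp_min alpha f Q fstar -> lipschitz M f ->
  Q x -> ~ argmin_set f Q fstar x -> subgradient f x g ->
  is_proj Q (x - ((f x - fstar) / enorm g ^+ 2) *: g) z ->
  edist x (argmin_set f Q fstar) <= alpha * gamma / mu ->
  0 < edist x (argmin_set f Q fstar) /\
  edist z (argmin_set f Q fstar) ^+ 2 <=
    (1 - alpha ^+ 2 * (1 - gamma) / M ^+ 2) * edist x (argmin_set f Q fstar) ^+ 2.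
Proof.
move=> mu0 al0 /andP[ga0 ga1] wc cQ [[x0 Qx0 fx0] minf] sh lip Qx nX sg pr dle.
set X := argmin_set f Q fstar.
have X0 : X !=set0 by exists x0.
set d := edist x X.
set F := f x - fstar.
have Fpos : 0 < F.
  rewrite /F subr_gt0 lt_neqAle minf // andbT.
  by apply/eqP => e; apply: nX; split.
have key : forall y, X y -> F - mu / 2 * enorm (x - y) ^+ 2 <= dotp g (x - y).
  move=> y [Qy fy].
  have := wc_subgrad (ltW mu0) wc sg y.
  rewrite fy enorm2 -(opprB x y) dotpNr dotpNl dotpNr opprK /F; lra.
have shx : alpha * d <= F by exact: sh.
have dmu : mu * d <= alpha * gamma by rewrite mulrC -ler_pdivlMr.
have d0 : 0 <= d by exact: edist_ge0.
have G0 := dotp_ge0 g.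
case: (eqVneq (dotp g g) 0) => [Gz | Gnz].
  exfalso; have g0 := dotp0 Gz.
  have H : F <= mu / 2 * d ^+ 2 + 0.
    apply: lim_sq => //; first by rewrite divr_ge0 // ltW.
    move=> y Xy; have := key y Xy; rewrite g0 /dotp.
    rewrite big1 => [|i _]; last by rewrite mxE mul0r.
    lra.
  have h1 : mu * d * d <= alpha * gamma * d by rewrite ler_wpM2r.
  rewrite expr2 in H.
  have h2 : alpha * d * (2 - gamma) <= 0.
  have e : mu / 2 * (d * d) + 0 = (mu * d * d) / 2 by ring.
  rewrite e in H.
  have e2 : alpha * d * (2 - gamma) = 2 * (alpha * d) - alpha * gamma * d by ring.
  rewrite e2.
  set A := alpha * d in shx *; set B := mu * d * d in H h1; set C := alpha * gamma * d in h1 *.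
  lra.
  have : d <= 0.
    have k : 0 < alpha * (2 - gamma) by apply: mulr_gt0 => //; lra.
    have e3 : alpha * d * (2 - gamma) = alpha * (2 - gamma) * d by ring.
    by move: h2; rewrite e3 pmulr_rle0.
  nra.
have Gp : 0 < dotp g g by rewrite lt_neqAle eq_sym Gnz.
have ng : 0 < enorm g.
  rewrite lt_neqAle enorm_ge0 andbT; apply/eqP => e.
  by move: Gp; rewrite -enorm2 -e expr2 mulr0 ltxx.
have gM := subgrad_bound lip sg ng.
have M0 : 0 < M by exact: lt_le_trans gM.
rewrite enorm2 in pr.
set G := dotp g g in Gp pr.
set h := F / G in pr.
have hG : h * G = F by rewrite /h mulfVK // gt_eqF.
have h0 : 0 <= h by rewrite divr_ge0 // ltW.
have GM : G <= M ^+ 2.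
  rewrite /G -enorm2; have := enorm_ge0 g; nra.
have dpos : F / M <= d.
  apply: lb_le_inf; first by case: X0 => y Xy; exists (enorm (x - y)), y.
  move=> _ [y [Qy fy] <-].
  rewrite ler_pdivrMr // mulrC.
  apply: le_trans (lip x y); rewrite /F -fy; exact: ler_norm.
have dp : 0 < d by apply: lt_le_trans dpos; rewrite divr_gt0.
split => //.
have step : edist z X ^+ 2 <= (1 + h * mu) * d ^+ 2 + (- (h * F)).
  apply: lim_sq => //; first by nra.
  move=> y Xy.
  have Qy : Q y by case: Xy.
  have e1 : edist z X ^+ 2 <= enorm (z - y) ^+ 2.
    have := edist_le z Xy; have := edist_ge0 z X0; have := enorm_ge0 (z - y); nra.
  apply: le_trans e1 _; rewrite enorm2.
  apply: le_trans (proj_ineq cQ pr Qy) _.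
  have -> : x - h *: g - y = (x - y) - h *: g.
    by apply/matrixP => i j; rewrite !mxE; ring.
  rewrite nsqB dotpZr dotpZl dotpZr (dotpC (x - y)) -/G -enorm2.
  have := key y Xy; nra.
have W0 : 0 <= alpha * (1 - gamma) * d by apply: mulr_ge0 => //; nra.
set W := alpha * (1 - gamma) * d in W0.
have t1 : F - mu * d ^+ 2 >= W by rewrite /W; nra.
have t2 : alpha * d * W <= h * W * M ^+ 2.
  have : h * W * G = F * W by rewrite mulrAC hG.
  have : h * W * G <= h * W * M ^+ 2 by apply: ler_wpM2l => //; exact: mulr_ge0.
  nra.
have t3 : alpha ^+ 2 * (1 - gamma) / M ^+ 2 * d ^+ 2 <= h * W.
  rewrite mulrAC ler_pdivrMr ?exprn_gt0 //.
  have -> : alpha ^+ 2 * (1 - gamma) * d ^+ 2 = alpha * d * W by rewrite /W; ring.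
  exact: t2.
apply: le_trans step _.
nra.
Qed.
End Aux4.

Unset Implicit Arguments. Set Strict Implicit.

Theorem corollary2 (R : realType) (n : nat) (f : 'rV[R]_n -> R)
    (Q : set 'rV[R]_n) (mu alpha gamma M fstar : R)
    (x g : nat -> 'rV[R]_n) (k : nat) :
  0 < mu -> 0 < alpha -> 0 < gamma < 1 ->
  weakly_convex mu f ->
  Q !=set0 -> convex_set Q -> closed_set Q ->
  is_min_value f Q fstar ->
  sharp_min alpha f Q fstar ->
  lipschitz M f ->
  Q (x 0%N) ->
  edist (x 0%N) (argmin_set f Q fstar) <= alpha * gamma / mu ->
  (forall i, (i <= k)%N -> subgradient f (x i) (g i)) ->
  (forall i, (i <= k)%N ->
     is_proj Q (x i - ((f (x i) - fstar) / enorm (g i) ^+ 2) *: g i) (x i.+1)) ->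
  (forall i, (i <= k)%N -> ~ argmin_set f Q fstar (x i)) ->
  edist (x k.+1) (argmin_set f Q fstar) ^+ 2 <=
    (1 - alpha ^+ 2 * (1 - gamma) / M ^+ 2) ^+ k.+1 *
    edist (x 0%N) (argmin_set f Q fstar) ^+ 2.
Proof.
move=> mu0 al0 ga wc Q0 cQ clQ mv sh lip Qx0 d0le sg pr nX.
set X := argmin_set f Q fstar in d0le nX *.
set c := 1 - alpha ^+ 2 * (1 - gamma) / M ^+ 2.
have X0 : X !=set0 by case: mv => [[y Qy fy] _]; exists y.
have c1 : c <= 1.
  rewrite /c lerBlDr lerDl; apply: divr_ge0; last exact: sqr_ge0.
  apply: mulr_ge0; first exact: sqr_ge0.
  by case/andP: ga => _ g1; rewrite subr_ge0 ltW.
suff H : forall i, (i <= k.+1)%N -> Q (x i) /\ edist (x i) X <= edist (x 0%N) X /\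
    edist (x i) X ^+ 2 <= c ^+ i * edist (x 0%N) X ^+ 2.
  by have [_ [_ ->]] := H k.+1 (leqnn _).
elim => [_ | i IH Hi].
  by split => //; split => //; rewrite expr0 mul1r.
have ik : (i <= k)%N by [].
have [Qxi [dle dsq]] := IH (ltnW Hi).
have dle' : edist (x i) X <= alpha * gamma / mu by exact: le_trans d0le.
have [dp st] := one_step mu0 al0 ga wc cQ mv sh lip Qxi (nX i ik) (sg i ik) (pr i ik) dle'.
rewrite -/X -/c in dp st.
have d'0 := edist_ge0 (x i.+1) X0.
have c0 : 0 <= c.
  have : 0 <= c * edist (x i) X ^+ 2 by apply: le_trans st; exact: sqr_ge0.
  by rewrite pmulr_lge0 // exprn_gt0.
split; first by case: (pr i ik).
split.
  apply: le_trans dle.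
  have : edist (x i.+1) X ^+ 2 <= edist (x i) X ^+ 2.
    apply: le_trans st _; rewrite ler_piMl //; exact: sqr_ge0.
  nra.
apply: le_trans st _.
by rewrite [c ^+ i.+1]exprS -mulrA ler_wpM2l.
Qed.
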